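(* If a configuration $(\mu,s)$ is stable under no observability for the objective game $G$, then its aggregate outcome $x(\mu,s)$ is a Nash equilibrium of $G$.
   Context: Objective game: $G=(N,A,\pi)$ is a finite $n$-player normal-form game, $N=\{1,\dots,n\}$, finite action sets $A_i$, $A=\prod_iA_i$, fitness functions $\pi_i:A\to\mathbb{R}$ extended multilinearly to $\prod_i\Delta(A_i)$. Preference types: $\Theta=\mathbb{R}^A$ (extended multilinearly). $\mathcal{M}(\Theta^n)$: product distributions $\mu=\mu_1\times\dots\times\mu_n$ on $\Theta^n$ with finitely supported marginals; $\operatorname{supp}\mu=\prod_i\operatorname{supp}\mu_i$, $\mu_{-i}(\theta_{-i})=\prod_{j\neq i}\mu_j(\theta_j)$. Mutants: for nonempty $J\subseteq N$, a mutant sub-profile is $\tilde\theta_J\in\prod_{j\in J}(\Theta\setminus\operatorname{supp}\mu_j)$ with shares $\varepsilon\in(0,1)^{|J|}$, $\|\varepsilon\|=\max_j\varepsilon_j$; post-entry $\tilde\mu^\varepsilon_i=(1-\varepsilon_i)\mu_i+\varepsilon_i\delta_{\tilde\theta_i}$ for $i\in J$, $\tilde\mu^\varepsilon_i=\mu_i$ otherwise. No observability: a strategy of player $i$ is $s_i:\operatorname{supp}\mu_i\to\Delta(A_i)$, $s(\theta)=(s_1(\theta_1),\dots,s_n(\theta_n))$; $s$ is a Bayesian–Nash equilibrium if for each $i$ and $\theta_i\in\operatorname{supp}\mu_i$, $s_i(\theta_i)\in\arg\max_{\sigma_i\in\Delta(A_i)}\sum_{\theta'_{-i}\in\operatorname{supp}\mu_{-i}}\mu_{-i}(\theta'_{-i})\theta_i(\sigma_i,s_{-i}(\theta'_{-i}))$;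 $B_0(\mu)$ is the set of these; $(\mu,s)$ with $s\in B_0(\mu)$ is a configuration, with aggregate outcome $x(\mu,s)=\big(\sum_{\theta_i}\mu_i(\theta_i)s_i(\theta_i)\big)_{i}$. Average fitness: $\Pi_{\theta_i}(\mu;s)=\pi_i(s_i(\theta_i),x(\mu,s)_{-i})$. Balanced: all types in each $\operatorname{supp}\mu_i$ have equal average fitness. Nearby set: for $\eta\ge0$, $B_0^\eta(\tilde\mu^\varepsilon;s)=\{\tilde s\in B_0(\tilde\mu^\varepsilon):\max_{i}\|\tilde s_i(\theta_i)-s_i(\theta_i)\|\le\eta\ \forall\theta\in\operatorname{supp}\mu\}$ (Euclidean norm). $(\mu,s)$ is stable if it is balanced and for every nonempty $J\subseteq N$, every $\tilde\theta_J$ and every $\eta>0$ there exist $\bar\eta\in[0,\eta)$ and $\bar\epsilon\in(0,1)$ such that for every $\varepsilon$ with $\|\varepsilon\|\in(0,\bar\epsilon)$, $B_0^{\bar\eta}(\tilde\mu^\varepsilon;s)\neq\emptyset$ and every $\tilde s\in B_0^{\bar\eta}(\tilde\mu^\varepsilon;s)$ satisfies either (i) some $j\in J$ has $\Pi_{\theta_j}(\tilde\mu^\varepsilon;\tilde s)>\Pi_{\tilde\theta_j}(\tilde\mu^\varepsilon;\tilde s)$ for all $\theta_j\in\operatorname{supp}\mu_j$, or (ii) for every $i$ all types in $\operatorname{supp}\tilde\mu^\varepsilon_i$ have equal average fitness under $(\tilde\mu^\varepsilon,\tilde s)$. *)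

(* Defs.v *)
(* Reals are modelled by an arbitrary real closed field
   R : rcfType (ordered field with square roots, needed for the Euclidean norm). *)
From HB Require Import structures.
From mathcomp Require Import all_boot all_order all_algebra.
Unset Printing Implicit Defensive.
Import Order.TTheory GRing.Theory Num.Theory.
Local Open Scope ring_scope.

Section Game.
Variables (R : rcfType) (n : nat) (A : 'I_n -> finType).

Definition prof := {dffun forall i : 'I_n, A i}.
(* preference types Theta = R^A *)
Definition Theta := {ffun prof -> R}.
Definition mprof := forall i : 'I_n, A i -> R.

Definition mixed (i : 'I_n) (sigma : A i -> R) : Prop :=
  (forall a, 0 <= sigma a) /\ \sum_(a : A i) sigma a = 1.

Definition ext (u : prof -> R) (sigma : mprof) : R :=
  \sum_(a : prof) (\prod_(j < n) sigma j (a j)) * u a.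

Definition ext_dev (u : prof -> R) (i : 'I_n) (si : A i -> R) (sigma : mprof) : R :=
  \sum_(a : prof) (si (a i) * \prod_(j < n | j != i) sigma j (a j)) * u a.

Definition nash (pi : 'I_n -> prof -> R) (x : mprof) : Prop :=
  (forall i, mixed i (x i)) /\
  forall i (si : A i -> R), mixed i si -> ext_dev (pi i) i si x <= ext (pi i) x.

(* A finitely supported distribution on Theta: its support (a duplicate-free
   list) together with the (positive) weights on the support. *)
Definition dist := (seq Theta * (Theta -> R))%type.
Definition is_dist (d : dist) : Prop :=
  uniq d.1 /\ (forall th, th \in d.1 -> 0 < d.2 th) /\ \sum_(th <- d.1) d.2 th = 1.

(* product distribution mu = mu_1 x ... x mu_n, given by its marginals *)
Definition pop := 'I_n -> dist.
Definition is_pop (mu : pop) : Prop := forall i, is_dist (mu i).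

(* strategies s_i : supp mu_i -> Delta(A_i) (only values on supports matter) *)
Definition strat := forall i : 'I_n, Theta -> A i -> R.

Definition theta0 : Theta := [ffun => 0].

(* enumeration of the type profiles whose coordinates j in P range over supp mu_j *)
Definition prof_list (mu : pop) (P : seq 'I_n) : seq ('I_n -> Theta) :=
  foldr (fun j acc =>
           [seq (fun k => if k == j then th else t k) | th <- (mu j).1, t <- acc])
        [:: fun _ => theta0] P.

Definition profiles_except (mu : pop) (i : 'I_n) : seq ('I_n -> Theta) :=
  prof_list mu [seq j <- enum 'I_n | j != i].

Definition EU (mu : pop) (s : strat) (i : 'I_n) (th : Theta) (si : A i -> R) : R :=
  \sum_(t <- profiles_except mu i)
     (\prod_(j < n | j != i) (mu j).2 (t j)) *
     ext_dev th i si (fun j : 'I_n => s j (t j)).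

Definition BNE (mu : pop) (s : strat) : Prop :=
  forall i th, th \in (mu i).1 ->
    mixed i (s i th) /\
    forall si : A i -> R, mixed i si -> EU mu s i th si <= EU mu s i th (s i th).

Definition agg (mu : pop) (s : strat) : mprof :=
  fun i a => \sum_(th <- (mu i).1) (mu i).2 th * s i th a.

Definition fitness (pi : 'I_n -> prof -> R) (mu : pop) (s : strat)
  (i : 'I_n) (th : Theta) : R :=
  ext_dev (pi i) i (s i th) (agg mu s).

Definition balanced (pi : 'I_n -> prof -> R) (mu : pop) (s : strat) : Prop :=
  forall i th th', th \in (mu i).1 -> th' \in (mu i).1 ->
    fitness pi mu s i th = fitness pi mu s i th'.

Definition enorm (i : 'I_n) (v : A i -> R) : R := Num.sqrt (\sum_(a : A i) v a ^+ 2).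

Definition entry (d : dist) (tht : Theta) (e : R) : dist :=
  (tht :: d.1, fun th => if th == tht then e else (1 - e) * d.2 th).

Definition postentry (mu : pop) (J : {set 'I_n}) (tht : 'I_n -> Theta)
  (eps : 'I_n -> R) : pop :=
  fun i => if i \in J then entry (mu i) (tht i) (eps i) else mu i.

Definition epsnorm (J : {set 'I_n}) (eps : 'I_n -> R) : R :=
  \big[Num.max/0]_(j in J) eps j.

Definition nearby (mut mu : pop) (s : strat) (eta : R) (st : strat) : Prop :=
  BNE mut st /\
  forall t : 'I_n -> Theta, (forall j, t j \in (mu j).1) ->
    forall i, enorm i (fun a => st i (t i) a - s i (t i) a) <= eta.

Definition stable (pi : 'I_n -> prof -> R) (mu : pop) (s : strat) : Prop :=
  balanced pi mu s /\
  forall J : {set 'I_n}, J != set0 ->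
  forall tht : 'I_n -> Theta, (forall j, j \in J -> tht j \notin (mu j).1) ->
  forall eta : R, 0 < eta ->
  exists etab epsb : R,
    0 <= etab < eta /\ 0 < epsb < 1 /\
    forall eps : 'I_n -> R, (forall j, j \in J -> 0 < eps j < 1) ->
      0 < epsnorm J eps < epsb ->
      (exists st, nearby (postentry mu J tht eps) mu s etab st) /\
      forall st, nearby (postentry mu J tht eps) mu s etab st ->
        (exists2 j, j \in J &
           forall th, th \in (mu j).1 ->
             fitness pi (postentry mu J tht eps) st j (tht j)
               < fitness pi (postentry mu J tht eps) st j th)
        \/ balanced pi (postentry mu J tht eps) st.

End Game.

Arguments prof {n} A.
Arguments Theta R {n} A.
Arguments mprof R {n} A.
Arguments pop R {n} A.
Arguments strat R {n} A.
Arguments is_pop {R n A} mu.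
Arguments BNE {R n A} mu s.
Arguments agg {R n A} mu s _ _.
Arguments stable {R n A} pi mu s.
Arguments nash {R n A} pi x.

(* Main.v *)
Require Import Defs.
From HB Require Import structures.
From mathcomp Require Import all_boot all_order all_algebra.
From mathcomp Require Import ring lra.
Import Order.TTheory GRing.Theory Num.Theory.
Local Open Scope ring_scope.

#[local] Arguments ext {R n A}.
#[local] Arguments ext_dev {R n A}.
#[local] Arguments mixed {R n A}.
#[local] Arguments EU {R n A}.
#[local] Arguments fitness {R n A}.
#[local] Arguments enorm {R n A}.
#[local] Arguments entry {R n A}.
#[local] Arguments postentry {R n A}.
#[local] Arguments epsnorm {R n}.
#[local] Arguments nearby {R n A}.
#[local] Arguments is_dist {R n A}.
#[local] Arguments balanced {R n A}.
#[local] Arguments prof_list {R n A}.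
#[local] Arguments profiles_except {R n A}.
#[local] Arguments theta0 {R n A}.

Section Fact.
Context {R : rcfType} {n : nat} {A : 'I_n -> finType}.

Lemma sum_prod_dep (D : forall j : 'I_n, A j -> R) :
  \sum_(a : prof A) \prod_(j < n) D j (a j) = \prod_(j < n) \sum_(x : A j) D j x.
Proof.
pose P_ := fun j => [ffun x : A j => D j x].
transitivity (\sum_(t : fprod A) \prod_(j in 'I_n) P_ j (t j)).
  rewrite (reindex (@fprod_of_dffun _ A)); last first.
    by exists (@dffun_of_fprod _ A) => x _; [exact: fprod_of_dffunK| exact: dffun_of_fprodK].
  apply: eq_bigr => a _; apply: eq_bigr => j _; by rewrite /P_ ffunE fprodE.
rewrite big_fprod /=.
rewrite (eq_bigr (fun j => \sum_(x in tagged_with A j) untag 0 (P_ j) x)); last first.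
  move=> j _; rewrite -(big_tag (fun j (x : A j) => P_ j x)) /=.
  by apply: eq_bigr => x _; rewrite /P_ ffunE.
by rewrite bigA_distr_big_dep.
Qed.
End Fact.

Section Gen.
Context {R : rcfType}.

Lemma big_all_eq (T : Type) (l : seq T) (Q : pred T) (F G : T -> R) :
  all Q l -> (forall t, Q t -> F t = G t) -> \sum_(t <- l) F t = \sum_(t <- l) G t.
Proof.
move=> H E; elim: l H => [|x l IH] /=; first by rewrite !big_nil.
by case/andP=> Qx Ql; rewrite !big_cons E // IH.
Qed.

Lemma big_all_gt0 (T : Type) (l : seq T) (Q : pred T) (F : T -> R) :
  all Q l -> (0 < size l)%N -> (forall t, Q t -> 0 < F t) -> 0 < \sum_(t <- l) F t.
Proof.
move=> H Hn P; elim: l H Hn => [|x l IH] //= /andP[Qx Ql] _.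
rewrite big_cons; case: l IH Ql => [|y l] IH Ql.
  by rewrite big_nil addr0 P.
by apply: ltr_wpDr; [apply: ltW; apply: IH|apply: P].
Qed.

Lemma all_allpairs (S T U : Type) (p : pred U) (q : pred T) (f : S -> T -> U)
  (s : seq S) (t : seq T) (Ps : pred S) :
  all Ps s -> all q t -> (forall x y, Ps x -> q y -> p (f x y)) ->
  all p [seq f x y | x <- s, y <- t].
Proof.
move=> Hs Ht H; elim: s Hs => [|x s IH] //= /andP[Px Pss].
rewrite all_cat IH // andbT all_map; apply: sub_all Ht => y qy; exact: H.
Qed.

Lemma mixed_bounds (T : finType) (v : T -> R) a :
  (forall a, 0 <= v a) -> \sum_a v a = 1 -> 0 <= v a <= 1.
Proof.
move=> H0 H1; rewrite H0 /= -H1 (bigD1 a) //= lerDl; exact: sumr_ge0.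
Qed.

Lemma prod_lip (I : Type) (r : seq I) (P : pred I) (x y : I -> R) :
  (forall j, P j -> 0 <= x j <= 1 /\ 0 <= y j <= 1) ->
  `|\prod_(j <- r | P j) x j - \prod_(j <- r | P j) y j| <= \sum_(j <- r | P j) `|x j - y j|.
Proof.
move=> H; elim: r => [|j r IH]; first by rewrite !big_nil subrr normr0.
rewrite !big_cons; case: ifP => // Pj.
have [/andP[x0 x1] /andP[y0 y1]] := H j Pj.
set X := \prod_(_ <- _ | _) _; set Y := \prod_(_ <- _ | _) _.
have Y0 : 0 <= Y by apply: prodr_ge0 => k /H [_ /andP[]].
have Y1 : Y <= 1 by apply: prodr_ile1 => k /H [_ ->].
have -> : x j * X - y j * Y = x j * (X - Y) + (x j - y j) * Y by ring.
apply: le_trans (ler_normD _ _) _; rewrite !normrM addrC lerD //.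
  by rewrite -[leRHS]mulr1 ler_wpM2l // ger0_norm.
apply: le_trans IH; by rewrite -[leRHS]mul1r ler_wpM2r // ger0_norm.
Qed.
End Gen.

Section Game.
Context {R : rcfType} {n : nat} {A : 'I_n -> finType}.

Definition gfun (u : prof A -> R) (i : 'I_n) (y : mprof R A) (ai : A i) : R :=
  \sum_(a : prof A | a i == ai) (\prod_(j < n | j != i) y j (a j)) * u a.

Lemma ext_dev_dec u i si y :
  ext_dev u i si y = \sum_(ai : A i) si ai * gfun u i y ai.
Proof.
rewrite /ext_dev (partition_big (fun a : prof A => a i) predT) //=.
apply: eq_bigr => ai _; rewrite /gfun big_distrr; apply: eq_bigr => a /eqP <-.
by rewrite /= mulrA.
Qed.

Lemma ext_eq u (x : mprof R A) i : ext u x = ext_dev u i (x i) x.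
Proof. by apply: eq_bigr => a _; rewrite (bigD1 i). Qed.

Lemma gfun_const u i y ai (h : A i -> R) :
  (forall j, j != i -> \sum_x y j x = 1) -> (forall a : prof A, u a = h (a i)) ->
  gfun u i y ai = h ai.
Proof.
move=> Hy Hu; rewrite /gfun.
rewrite (eq_bigr (fun a : prof A => h ai * \prod_(j < n | j != i) y j (a j))); last first.
  by move=> a /eqP Ha; rewrite Hu Ha mulrC.
rewrite -mulr_sumr -[RHS]mulr1; congr (_ * _).
pose D := @dfwith 'I_n (fun j => A j -> R) y i (fun x : A i => (x == ai)%:R).
transitivity (\sum_(a : prof A) \prod_(j < n) D j (a j)).
  rewrite big_mkcond; apply: eq_bigr => a _.
  rewrite [RHS](bigD1 i) //= /D dfwith_in.
  rewrite [X in _ = _ * X](eq_bigr (fun j => y j (a j))); last first.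
    by move=> j ji; rewrite dfwith_out // eq_sym.
  by case: (a i == ai); rewrite ?mul1r ?mul0r.
rewrite sum_prod_dep (bigD1 i) //= /D dfwith_in.
rewrite (bigD1 ai) //= eqxx big1 ?addr0; last by move=> x /negbTE ->.
rewrite mul1r big1 // => j ji; have ij : i != j by rewrite eq_sym.
by rewrite dfwith_out // Hy.
Qed.


Lemma gfun_lip u i (y y' : mprof R A) ai (eta : R) : 0 <= eta ->
  (forall j, j != i -> forall x, 0 <= y j x <= 1 /\ 0 <= y' j x <= 1) ->
  (forall j, j != i -> forall x, `|y j x - y' j x| <= eta) ->
  `|gfun u i y ai - gfun u i y' ai| <= n%:R * eta * \sum_a `|u a|.
Proof.
move=> e0 H01 He; rewrite /gfun -sumrB; apply: le_trans (ler_norm_sum _ _ _) _.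
rewrite mulr_sumr [X in _ <= X](bigID (fun a : prof A => a i == ai)) /=.
rewrite -[X in X <= _]addr0; apply: lerD; last by apply: sumr_ge0 => a _; rewrite mulr_ge0 ?normr_ge0 // mulr_ge0.
apply: ler_sum => a _; rewrite -mulrBl normrM ler_wpM2r //.
apply: le_trans (@prod_lip R _ (index_enum _) (fun j : 'I_n => j != i) (fun j => y j (a j)) (fun j => y' j (a j)) _) _; first by move=> j /H01.
apply: le_trans (_ : \sum_(j < n | j != i) eta <= _).
  by apply: ler_sum => j /He.
apply: le_trans (_ : \sum_(j < n) eta <= _).
  by rewrite [X in _ <= X](bigID (fun j : 'I_n => j != i)) /= lerDl sumr_ge0.
by rewrite sumr_const card_ord mulr_natl.
Qed.

Lemma gfun_bound u i (y : mprof R A) ai :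
  (forall j, j != i -> forall x, 0 <= y j x <= 1) ->
  `|gfun u i y ai| <= \sum_a `|u a|.
Proof.
move=> H01; rewrite /gfun; apply: le_trans (ler_norm_sum _ _ _) _.
rewrite [X in _ <= X](bigID (fun a : prof A => a i == ai)) /=.
rewrite -[X in X <= _]addr0; apply: lerD; last by apply: sumr_ge0.
apply: ler_sum => a _; rewrite normrM -[leRHS]mul1r ler_wpM2r //.
rewrite ger0_norm; first by apply: prodr_ile1 => j /H01 /(_ (a j)).
by apply: prodr_ge0 => j /H01 /(_ (a j)) /andP[].
Qed.

Lemma mix_comb i (d : @dist R n A) (f : Theta R A -> A i -> R) :
  is_dist d -> (forall th, th \in d.1 -> mixed i (f th)) ->
  mixed i (fun a => \sum_(th <- d.1) d.2 th * f th a).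
Proof.
move=> [_ [Hp Hs]] Hm; split.
  move=> a; rewrite big_seq; apply: sumr_ge0 => th Hth.
  by rewrite mulr_ge0 ?(ltW (Hp _ Hth)) //; case: (Hm _ Hth).
rewrite exchange_big /= -Hs big_seq [RHS]big_seq; apply: eq_bigr => th Hth.
by rewrite -mulr_sumr; case: (Hm _ Hth) => _ ->; rewrite mulr1.
Qed.

Lemma prof_list_all (mu : pop R A) P :
  all (fun t : 'I_n -> Theta R A => all (fun j => t j \in (mu j).1) P) (prof_list mu P).
Proof.
elim: P => [|j P IH] //=.
apply: (@all_allpairs _ _ _ _ _ _ _ _ (fun th => th \in (mu j).1) _ IH) => //.
move=> th t Hth Ht /=; rewrite eqxx Hth /=.
apply/allP => k kP; case: ifP => [/eqP -> //|_]; exact: (allP Ht).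
Qed.

Lemma prof_list_size (mu : pop R A) P :
  (forall j, (0 < size (mu j).1)%N) -> (0 < size (prof_list mu P))%N.
Proof.
move=> H; elim: P => [|j P IH] //=; by rewrite size_allpairs muln_gt0 H IH.
Qed.
End Game.

Theorem mainTheorem10 (R : rcfType) (n : nat) (A : 'I_n -> finType)
  (pi : 'I_n -> prof A -> R) (mu : pop R A) (s : strat R A) :
  is_pop mu -> BNE mu s -> stable pi mu s -> nash pi (agg mu s).
Proof.
move=> Hpop Hbne [Hbal Hstab].
set x := agg mu s.
have Hne j : (0 < size (mu j).1)%N.
  have [_ [_ Hs]] := Hpop j; move: Hs; case: (mu j).1 => //.
  by rewrite big_nil => /eqP; rewrite eq_sym oner_eq0.
pose def j := nth theta0 (mu j).1 0.
have Hdef j : def j \in (mu j).1 by rewrite mem_nth.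
have Hxm j : mixed j (x j).
  by apply: mix_comb (Hpop j) _ => th Hth; case: (Hbne j th Hth).
have Hx01 j a : 0 <= x j a <= 1 by case: (Hxm j) => H0 H1; apply: mixed_bounds.
split=> // i si Hsi; rewrite leNgt; apply/negP => Hlt.
set g := gfun (pi i) i x.
set v := \sum_(ai : A i) x i ai * g ai.
have Hv : v < \sum_(ai : A i) si ai * g ai by move: Hlt; rewrite (ext_eq _ _ i) !ext_dev_dec.
have [b Hb] : exists b, v < g b.
  case: (boolP [exists b, v < g b]) => [/existsP //|/existsPn Hn].
  exfalso; move: Hv; apply/negP; rewrite -leNgt.
  case: Hsi => Hs0 Hs1.
  apply: le_trans (_ : \sum_ai si ai * v <= _).
    by apply: ler_sum => ai _; rewrite ler_wpM2l // leNgt Hn.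
  by rewrite -mulr_suml Hs1 mul1r.
set C := \sum_(a : prof A) `|pi i a|.
have C0 : 0 <= C by apply: sumr_ge0.
have [a0 _|Hnone] := pickP (fun _ : prof A => true); last first.
  have Hg0 ai : g ai = 0 by rewrite /g /gfun big1 // => a; have := Hnone a.
  by move: Hb; rewrite /v Hg0 big1 ?ltxx // => ai _; rewrite Hg0 mulr0.
set c := 1 + \sum_(th <- (mu i).1) `|th a0|.
pose tht0 : Theta R A := [ffun a : prof A => c + (a i == b)%:R].
pose tht := fun _ : 'I_n => tht0.
have Htht : tht0 \notin (mu i).1.
  apply/negP => Hin; have [Hu _] := Hpop i.
  have H1 : `|tht0 a0| <= \sum_(th <- (mu i).1) `|th a0|.
    rewrite (bigD1_seq tht0) //= lerDl; exact: sumr_ge0.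
  have H2 : tht0 a0 <= `|tht0 a0| by apply: ler_norm.
  have H3 : 0 <= (a0 i == b)%:R :> R by [].
  move: H1 H2; rewrite /tht0 ffunE /c; lra.
set delta := g b - v.
have Hdelta : 0 < delta by rewrite subr_gt0.
set K := (2 * n%:R + #|A i|%:R) * (C + 1) + 1.
have HK : 0 < K by rewrite /K; apply: ltr_wpDl => //; apply: mulr_ge0; [apply: addr_ge0; [apply: mulr_ge0|] | lra].
have Hset : [set i] != set0 by apply/set0Pn; exists i; rewrite in_set1.
have Hthtn : forall j, j \in [set i] -> tht j \notin (mu j).1 by move=> j /set1P ->.
have [etab [epsb [/andP[etab0 etabl] [/andP[epsb0 epsb1] Hall]]]] :=
  Hstab [set i] Hset tht Hthtn (delta / K) (divr_gt0 Hdelta HK).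
pose e := epsb / 2; pose eps := fun _ : 'I_n => e.
have He0 : 0 < e by rewrite /e; lra.
have He1 : e < epsb by rewrite /e; lra.
have Hepsn : epsnorm [set i] eps = e.
  rewrite /epsnorm big_set1E /eps; apply/max_idPl; exact: ltW.
have Heps : forall j, j \in [set i] -> 0 < eps j < 1.
  by move=> j _; rewrite /eps He0 /=; lra.
have Hn : 0 < epsnorm [set i] eps < epsb by rewrite Hepsn He0 He1.
have [[st Hst] Hconc] := Hall eps Heps Hn.
set mut := postentry mu [set i] tht eps.
have Hmutj j : j != i -> mut j = mu j.
  by move=> ji; rewrite /mut /postentry in_set1 (negbTE ji).
have Hmuti : mut i = entry (mu i) tht0 e by rewrite /mut /postentry in_set1 eqxx.
have [Hbst Hnear] := Hst.
have Hstm j th : j != i -> th \in (mu j).1 -> mixed j (st j th).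
  by move=> ji Hth; have := Hbst j th; rewrite -/mut Hmutj // => /(_ Hth) [].
have Hsti th : th \in (mu i).1 -> mixed i (st i th).
  by move=> Hth; have := Hbst i th; rewrite -/mut Hmuti inE Hth orbT => /(_ isT) [].
have Hdiff j th a : th \in (mu j).1 -> `|st j th a - s j th a| <= etab.
  move=> Hth; pose t := fun k => if k == j then th else def k.
  have Ht k : t k \in (mu k).1 by rewrite /t; case: eqP => [->|].
  have := Hnear t Ht j; rewrite /t eqxx /enorm; apply: le_trans.
  rewrite -sqrtr_sqr; apply: ler_wsqrtr.
  rewrite (bigD1 a) //= lerDl; apply: sumr_ge0 => a' _; exact: sqr_ge0.
have Hcomb j (f f' : Theta R A -> A j -> R) a :
    (forall th, th \in (mu j).1 -> `|f th a - f' th a| <= etab) ->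
    `|\sum_(th <- (mu j).1) (mu j).2 th * f th a - \sum_(th <- (mu j).1) (mu j).2 th * f' th a| <= etab.
  move=> Hf; have [_ [Hp Hs]] := Hpop j.
  rewrite -sumrB; apply: le_trans (ler_norm_sum _ _ _) _.
  apply: le_trans (_ : \sum_(th <- (mu j).1) (mu j).2 th * etab <= _).
    rewrite big_seq [X in _ <= X]big_seq; apply: ler_sum => th Hth.
    by rewrite -mulrBr normrM ger0_norm ?(ltW (Hp _ Hth)) // ler_wpM2l ?(ltW (Hp _ Hth)) ?Hf.
  by rewrite -mulr_suml Hs mul1r.
set xt := agg mut st.
have Hxtj j a : j != i -> xt j a = \sum_(th <- (mu j).1) (mu j).2 th * st j th a.
  by move=> ji; rewrite /xt /agg Hmutj.
have Hxt01 j a : j != i -> 0 <= xt j a <= 1.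
  move=> ji; rewrite Hxtj //.
  have [H0 H1] := @mix_comb _ _ _ j _ (st j) (Hpop j) (fun th Hth => Hstm j th ji Hth).
  exact: (@mixed_bounds _ _ _ a H0 H1).
have Hxdiff j a : j != i -> `|x j a - xt j a| <= etab.
  move=> ji; rewrite Hxtj // /x /agg; apply: Hcomb => th Hth.
  by rewrite distrC; apply: Hdiff.
set g' := gfun (pi i) i xt.
have Hglip ai : `|g ai - g' ai| <= n%:R * etab * C.
  apply: gfun_lip => // j ji a; last exact: Hxdiff.
  by rewrite Hx01 Hxt01.
have Hgb ai : `|g' ai| <= C.
  by apply: gfun_bound => j ji a; apply: Hxt01.
set m := fun ai => \sum_(th <- (mu i).1) (mu i).2 th * st i th ai.
have Hmdiff ai : `|m ai - x i ai| <= etab.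
  by rewrite /m /x /agg; apply: Hcomb => th Hth; apply: Hdiff.
have Hfilt j : (j \in [seq j <- enum 'I_n | j != i]) = (j != i).
  by rewrite mem_filter mem_enum andbT.
pose Qt := fun t : 'I_n -> Theta R A =>
  all (fun j => t j \in (mut j).1) [seq j <- enum 'I_n | j != i].
have HQall : all Qt (profiles_except mut i) := prof_list_all mut _.
have Hext t si' : Qt t -> mixed i si' ->
    ext_dev tht0 i si' (fun j => st j (t j)) = c + si' b.
  move=> Ht [Hs0 Hs1]; rewrite ext_dev_dec.
  rewrite (eq_bigr (fun ai => si' ai * (c + (ai == b)%:R))); last first.
    move=> ai _; congr (_ * _); apply: (@gfun_const _ _ _ _ _ _ _ (fun ai => c + (ai == b)%:R)) => [j ji|a]; last by rewrite ffunE.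
    have Htj : t j \in (mu j).1.
      by rewrite -(Hmutj j ji); apply: (allP Ht); rewrite Hfilt.
    by case: (Hstm j (t j) ji Htj).
  rewrite (eq_bigr (fun ai => si' ai * c + si' ai * (ai == b)%:R)); last first.
    by move=> ai _; rewrite mulrDr.
  rewrite big_split /= -mulr_suml Hs1 mul1r (bigD1 b) //= eqxx mulr1 big1 ?addr0 //.
  by move=> ai /negbTE ->; rewrite mulr0.
set W := \sum_(t <- profiles_except mut i) \prod_(j < n | j != i) (mut j).2 (t j).
have HEU si' : mixed i si' -> EU mut st i tht0 si' = W * (c + si' b).
  move=> Hm; rewrite /EU /W mulr_suml; apply: big_all_eq HQall _ => t Ht.
  by rewrite Hext.
have HW : 0 < W.
  rewrite /W; apply: (@big_all_gt0 _ _ _ _ (fun t => \prod_(j < n | j != i) (mut j).2 (t j)) HQall).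
    apply: prof_list_size => j; case: (eqVneq j i) => [->|ji].
      by rewrite Hmuti.
    by rewrite Hmutj.
  move=> t Ht; apply: prodr_gt0 => j ji.
  have Htj : t j \in (mut j).1 by apply: (allP Ht); rewrite Hfilt.
  rewrite Hmutj // in Htj *.
  by have [_ [Hp _]] := Hpop j; apply: Hp.
have [Hmm Hbr] : mixed i (st i tht0) /\ (forall si', mixed i si' -> EU mut st i tht0 si' <= EU mut st i tht0 (st i tht0)).
  by have := Hbst i tht0; rewrite -/mut Hmuti inE eqxx => /(_ isT).
pose db := fun ai : A i => (ai == b)%:R : R.
have Hdb : mixed i db.
  split=> [ai|]; first by rewrite /db ler0n.
  by rewrite /db (bigD1 b) //= eqxx big1 ?addr0 // => ai /negbTE ->.
have Hsb : st i tht0 b = 1.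
  have := Hbr db Hdb; rewrite !HEU // /db eqxx ler_pM2l // lerD2l => H1.
  apply/eqP; rewrite eq_le H1 andbT.
  by case: Hmm => H0 Hs; have /andP[] := @mixed_bounds _ _ _ b H0 Hs.
have Hso ai : ai != b -> st i tht0 ai = 0.
  move=> aib; case: Hmm => H0 Hs.
  have Hz : \sum_(a' | a' != b) st i tht0 a' = 0.
    by move: Hs; rewrite (bigD1 b) //= Hsb; lra.
  have HP := @psumr_eq0P _ _ (fun a' => a' != b) (st i tht0) (fun a' _ => H0 a').
  exact: HP Hz ai aib.
have Hfm : fitness pi mut st i tht0 = g' b.
  rewrite /fitness ext_dev_dec (bigD1 b) //= Hsb mul1r big1 ?addr0 //.
  by move=> ai /Hso ->; rewrite mul0r.
have Havg : \sum_(th <- (mu i).1) (mu i).2 th * fitness pi mut st i th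
    = \sum_(ai : A i) m ai * g' ai.
  rewrite /m.
  under eq_bigr do rewrite /fitness ext_dev_dec mulr_sumr.
  rewrite exchange_big; apply: eq_bigr => ai _; rewrite mulr_suml.
  by apply: eq_bigr => th _; rewrite mulrA.
have Hkey : \sum_(ai : A i) m ai * g' ai < g' b.
  have E : \sum_(ai : A i) m ai * g' ai =
      \sum_(ai : A i) (m ai - x i ai) * g' ai + \sum_(ai : A i) x i ai * (g' ai - g ai) + v.
    by rewrite /v -!big_split; apply: eq_bigr => ai _ /=; ring.
  have E1 : \sum_(ai : A i) (m ai - x i ai) * g' ai <= #|A i|%:R * (etab * C).
    apply: le_trans (_ : \sum_(ai : A i) etab * C <= _).
      apply: ler_sum => ai _; apply: le_trans (ler_norm _) _; rewrite normrM.
      by apply: ler_pM => //; rewrite normr_ge0.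
    by rewrite sumr_const mulr_natl.
  have E2 : \sum_(ai : A i) x i ai * (g' ai - g ai) <= n%:R * etab * C.
    apply: le_trans (_ : \sum_(ai : A i) x i ai * (n%:R * etab * C) <= _).
      apply: ler_sum => ai _; have /andP[x0 _] := Hx01 i ai.
      apply: ler_wpM2l => //; apply: le_trans (ler_norm _) _.
      by rewrite distrC.
    by rewrite -mulr_suml; case: (Hxm i) => _ ->; rewrite mul1r.
  have E3 : g b - g' b <= n%:R * etab * C by apply: le_trans (ler_norm _) _.
  have Hek : etab * K < delta by rewrite -ltr_pdivlMr.
  have N0 : 0 <= n%:R :> R by [].
  have N1 : 0 <= #|A i|%:R :> R by [].
  have P1 : 0 <= (2 * n%:R + #|A i|%:R) * etab :> R.
    by apply: mulr_ge0 => //; apply: addr_ge0 => //; apply: mulr_ge0.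
  rewrite E; move: Hek E1 E2 E3 P1; rewrite /K /delta; nra.
case: (Hconc st Hst) => [[j /set1P -> Hlt']|Hbal'].
  have : g' b < \sum_(th <- (mu i).1) (mu i).2 th * fitness pi mut st i th.
    have [_ [Hp Hs]] := Hpop i.
    rewrite -subr_gt0 -[X in _ - X]mul1r -Hs mulr_suml -sumrB.
    apply: (@big_all_gt0 _ _ _ (fun th => th \in (mu i).1)).
    - by apply/allP.
    - exact: Hne.
    - move=> th Hth; rewrite -mulrBr mulr_gt0 ?Hp // subr_gt0 -Hfm.
      exact: Hlt'.
  by rewrite Havg => /lt_trans/(_ Hkey); rewrite ltxx.
have : \sum_(th <- (mu i).1) (mu i).2 th * fitness pi mut st i th = g' b.
  have [_ [Hp Hs]] := Hpop i.
  rewrite -[RHS]mul1r -Hs mulr_suml big_seq [RHS]big_seq; apply: eq_bigr => th Hth.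
  rewrite -Hfm (Hbal' i th tht0) // -/mut Hmuti inE ?eqxx ?Hth ?orbT //.
by rewrite Havg => Heq; move: Hkey; rewrite Heq ltxx.
Qed.
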